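(* For every variable-free formula $\psi$, the logics $\mathrm{E4}+\psi$, $\mathrm{S04}+\psi$ and $\mathrm{EMC4}+\psi$ have the finite model property (there is a class of finite neighborhood frames whose set of valid formulas is exactly the logic).
   Context: Modal formulas are built from a countable set $Var$ of propositional variables using $\neg$, $\wedge$ and the unary operator $\Box$; a formula is variable-free if no element of $Var$ occurs in it except within the constants $\top$, $\bot$ (here $\top:=\neg(p\wedge\neg p)$, $\bot:=p\wedge\neg p$ are treated as constants). A (modal) logic is a set of formulas containing all classical tautologies and closed under modus ponens, uniform substitution, and the rule (RE): from $\varphi\leftrightarrow\psi$ infer $\Box\varphi\leftrightarrow\Box\psi$. $\mathrm{E}$ is the smallest logic; $\mathrm{L}+\psi$ is the smallest logic containing $\mathrm{L}\cup\{\psi\}$. Axioms: $(4)\ \Box p\to\Box\Box p$; $(\mathrm{T})\ \Box p\to p$; $(\mathrm{M})\ \Box(p\wedge q)\to(\Box p\wedge\Box q)$; $(\mathrm{C})\ (\Box p\wedge\Box q)\to\Box(p\wedge q)$. $\mathrm{E4}=\mathrm{E}+4$, $\mathrm{EMC4}=\mathrm{E4}+\mathrm{M}+\mathrm{C}$, $\mathrm{S04}=\mathrm{E4}+\mathrm{T}+\mathrm{M}$. A neighborhood frame is $(W,\bm{\Box})$ with $W\neq\varnothing$, $\bm{\Box}:\mathcal P(W)\to\mathcal P(W)$; models add $V:Var\to\mathcal P(W)$; truth sets: $|p|_M=V(p)$, $|\neg\varphi|_M=W\setminus|\varphi|_M$, $|\varphi\wedge\psi|_M=|\varphi|_M\cap|\psi|_M$,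 $|\Box\varphi|_M=\bm{\Box}|\varphi|_M$; $\varphi$ is valid on a frame if $|\varphi|_M=W$ for all models $M$ on it. *)

(* Defs.v *)
From mathcomp Require Import all_boot.
Unset Printing Implicit Defensive.

Inductive form : Type :=
| Var : nat -> form
| Neg : form -> form
| And : form -> form -> form
| Box : form -> form.

Definition p0 : form := Var 0.
Definition Bot : form := And p0 (Neg p0).
Definition Top : form := Neg (And p0 (Neg p0)).
Definition Or (a b : form) : form := Neg (And (Neg a) (Neg b)).
Definition Imp (a b : form) : form := Neg (And a (Neg b)).
Definition Iff (a b : form) : form := And (Imp a b) (Imp b a).

Inductive var_free : form -> Prop :=
| vf_top : var_free Top
| vf_bot : var_free Bot
| vf_neg a : var_free a -> var_free (Neg a)
| vf_and a b : var_free a -> var_free b -> var_free (And a b)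
| vf_box a : var_free a -> var_free (Box a).

(* Classical tautologies: true under every boolean valuation of the
   propositional variables and of the boxed formulas (treated as atoms). *)
Fixpoint beval (v : nat -> bool) (bx : form -> bool) (f : form) : bool :=
  match f with
  | Var n => v n
  | Neg a => ~~ beval v bx a
  | And a b => beval v bx a && beval v bx b
  | Box a => bx a
  end.

Definition tautology (f : form) : Prop :=
  forall (v : nat -> bool) (bx : form -> bool), beval v bx f = true.

Fixpoint subst (s : nat -> form) (f : form) : form :=
  match f with
  | Var n => s n
  | Neg a => Neg (subst s a)
  | And a b => And (subst s a) (subst s b)
  | Box a => Box (subst s a)
  end.

Definition is_logic (L : form -> Prop) : Prop :=
  [/\ (forall f, tautology f -> L f),
      (forall a b, L a -> L (Imp a b) -> L b),
      (forall s a, L a -> L (subst s a)) &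
      (forall a b, L (Iff a b) -> L (Iff (Box a) (Box b)))].

Definition gen_logic (A : form -> Prop) (f : form) : Prop :=
  forall L, is_logic L -> (forall a, A a -> L a) -> L f.

Definition E : form -> Prop := gen_logic (fun _ => False).
Definition plus (L : form -> Prop) (psi : form) : form -> Prop :=
  gen_logic (fun f => L f \/ f = psi).

Definition p : form := Var 0.
Definition q : form := Var 1.
Definition ax4 : form := Imp (Box p) (Box (Box p)).
Definition axT : form := Imp (Box p) p.
Definition axM : form := Imp (Box (And p q)) (And (Box p) (Box q)).
Definition axC : form := Imp (And (Box p) (Box q)) (Box (And p q)).

Definition E4 : form -> Prop := plus E ax4.
Definition EMC4 : form -> Prop := plus (plus E4 axM) axC.
Definition S04 : form -> Prop := plus (plus E4 axT) axM.

Record finframe := FinFrame {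
  fW :> finType;
  fW_nonempty : 0 < #|fW|;
  fbox : {set fW} -> {set fW}
}.

Fixpoint truth (F : finframe) (V : nat -> {set F}) (f : form) : {set F} :=
  match f with
  | Var n => V n
  | Neg a => ~: truth F V a
  | And a b => truth F V a :&: truth F V b
  | Box a => fbox F (truth F V a)
  end.

Definition valid (F : finframe) (f : form) : Prop :=
  forall V : nat -> {set F}, truth F V f = [set: F].

Definition fmp (L : form -> Prop) : Prop :=
  exists C : finframe -> Prop, forall f, L f <-> (forall F, C F -> valid F f).

(* Main.v *)
Require Import Defs.
From mathcomp Require Import all_boot.
From HB Require Import structures.
From Stdlib Require Import ClassicalEpsilon Classical.

Set Implicit Arguments. Unset Strict Implicit.

Definition form_eq_dec (a b : form) : {a = b} + {a <> b}.
Proof. decide equality; apply: PeanoNat.Nat.eq_dec. Defined.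
HB.instance Definition _ := hasDecEq.Build form (compareP form_eq_dec).

Definition pb (P : Prop) : bool := if excluded_middle_informative P then true else false.
Lemma pbP P : reflect P (pb P).
Proof. rewrite /pb; case: excluded_middle_informative => h; constructor; done. Qed.

Fixpoint bigAnd (hs : seq form) : form := if hs is h :: t then And h (bigAnd t) else Top.

Lemma beval_Top v bx : beval v bx Top. Proof. by rewrite /= andbN. Qed.
Lemma beval_bigAnd v bx hs : beval v bx (bigAnd hs) = all (beval v bx) hs.
Proof. elim: hs => [|h t IH] /=; [exact: beval_Top | by rewrite IH]. Qed.

Section Logic.
Variable L : form -> Prop.
Hypothesis hL : is_logic L.

Lemma Ltaut f : tautology f -> L f. Proof. by case: hL => h _ _ _; apply: h. Qed.
Lemma LMP a b : L a -> L (Imp a b) -> L b. Proof. by case: hL => _ h _ _; apply: h. Qed.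
Lemma Lsubst s a : L a -> L (subst s a). Proof. by case: hL => _ _ h _; apply: h. Qed.
Lemma LRE a b : L (Iff a b) -> L (Iff (Box a) (Box b)). Proof. by case: hL => _ _ _ h; apply: h. Qed.

Lemma L_bigAnd hs : (forall h, h \in hs -> L h) -> L (bigAnd hs).
Proof.
elim: hs => [|h t IH] H /=.
  by apply: Ltaut => v bx; exact: beval_Top.
have h1 : L h by apply: H; rewrite inE eqxx.
have h2 : L (bigAnd t) by apply: IH => x hx; apply: H; rewrite inE hx orbT.
apply: (LMP h2); apply: (LMP h1); apply: Ltaut => v bx /=.
by case: (beval v bx h); case: (beval v bx (bigAnd t)).
Qed.

Lemma taut_cons hs g : (forall h, h \in hs -> L h) ->
  (forall v bx, all (beval v bx) hs -> beval v bx g) -> L g.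
Proof.
move=> H T; apply: (LMP (L_bigAnd H)); apply: Ltaut => v bx /=.
by rewrite beval_bigAnd; case E: (all _ _) => //=; rewrite (T v bx E).
Qed.

Definition sb (a b : form) (n : nat) : form :=
  match n with 0 => a | 1 => b | _ => Var n end.

Lemma L_ax4 a : L ax4 -> L (Imp (Box a) (Box (Box a))).
Proof. by move=> h; have := Lsubst (sb a a) h. Qed.
Lemma L_axT a : L axT -> L (Imp (Box a) a).
Proof. by move=> h; have := Lsubst (sb a a) h. Qed.
Lemma L_axM a b : L axM -> L (Imp (Box (And a b)) (And (Box a) (Box b))).
Proof. by move=> h; have := Lsubst (sb a b) h. Qed.
Lemma L_axC a b : L axC -> L (Imp (And (Box a) (Box b)) (Box (And a b))).
Proof. by move=> h; have := Lsubst (sb a b) h. Qed.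

Lemma L_mono a b : L axM -> L (Imp a b) -> L (Imp (Box a) (Box b)).
Proof.
move=> hM hab.
have e : L (Iff a (And a b)).
  apply: (@taut_cons [:: Imp a b]) => [h|v bx]; first by rewrite inE => /eqP ->.
  by rewrite /= andbT; case: (beval v bx a); case: (beval v bx b).
have e2 := LRE e.
apply: (@taut_cons [:: Iff (Box a) (Box (And a b)); Imp (Box (And a b)) (And (Box a) (Box b))]).
  by move=> h; rewrite !inE => /orP[] /eqP ->; [exact: e2 | exact: L_axM].
move=> v bx /=; rewrite andbT.
by case: (bx a); case: (bx b); case: (bx (And a b)).
Qed.

End Logic.

Section Atoms.
Variable L : form -> Prop.
Hypothesis hL : is_logic L.
Variable S : seq form.
Local Notation atom := {ffun 'I_(size S) -> bool}.

Definition lit (b : bool) f := if b then f else Neg f.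
Definition conj (s : atom) : form :=
  bigAnd [seq lit (s i) (nth Top S i) | i <- enum 'I_(size S)].
Definition atom_of v bx : atom := [ffun i : 'I_(size S) => beval v bx (nth Top S i)].

Lemma beval_conj v bx s : beval v bx (conj s) = (atom_of v bx == s).
Proof.
rewrite beval_bigAnd all_map.
apply/allP/eqP => [H | <- i _].
  apply/ffunP => i; rewrite ffunE; have := H i (mem_enum _ i).
  by rewrite /= /lit; case: (s i) => //= /negbTE.
by rewrite /= /lit /atom_of ffunE; case E: (beval v bx (nth Top S i)) => /=; rewrite ?E.
Qed.

Lemma one_in a : L a -> forall h, h \in [:: a] -> L h.
Proof. by move=> ha h; rewrite inE => /eqP ->. Qed.

Definition cons (s : atom) := ~ L (Neg (conj s)).

Lemma realize s hs : cons s -> (forall h, h \in hs -> L h) ->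
  exists v bx, atom_of v bx = s /\ all (beval v bx) hs.
Proof.
move=> cs H; apply: NNPP => N; apply: cs.
apply: (taut_cons hL H) => v bx A /=; rewrite beval_conj.
by apply/negP => /eqP E; apply: N; exists v, bx.
Qed.

Lemma fund g : (forall s v bx, cons s -> atom_of v bx = s -> beval v bx g) -> L g.
Proof.
move=> H.
apply: (@taut_cons L hL [seq Neg (conj s) | s <- enum {: atom} & ~~ pb (cons s)]).
  move=> h /mapP [s]; rewrite mem_filter => /andP [/pbP nc _] ->.
  by apply: NNPP.
move=> v bx A.
case: (pbP (cons (atom_of v bx))) => c; first by apply: H c _.
move/allP: A => /(_ (Neg (conj (atom_of v bx)))).
move=> Hm.
have : beval v bx (Neg (conj (atom_of v bx))).
  apply: Hm; apply/mapP; exists (atom_of v bx) => //.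
  by rewrite mem_filter mem_enum andbT; apply/negP => /pbP.
by rewrite /= beval_conj eqxx.
Qed.

Definition at_ (s : atom) f := [exists i : 'I_(size S), (nth Top S i == f) && s i].

Lemma at_beval s v bx f : atom_of v bx = s -> f \in S -> at_ s f = beval v bx f.
Proof.
move=> <- fS; apply/existsP/idP => [[i /andP[/eqP <-]]|bf]; first by rewrite ffunE.
have hi : index f S < size S by rewrite index_mem.
by exists (Ordinal hi); rewrite /= nth_index // eqxx ffunE /= nth_index.
Qed.

Local Notation W := {s : atom | pb (cons s)}.

Lemma wcons (w : W) : cons (val w).
Proof. by apply/pbP; exact: valP w. Qed.

Definition ext f : {set W} := [set w | at_ (val w) f].

Lemma ext_le a b : a \in S -> b \in S -> L (Imp a b) -> ext a \subset ext b.
Proof.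
move=> aS bS hab; apply/subsetP => w; rewrite !inE.
have [v [bx [e /=]]] := @realize _ [:: Imp a b] (@wcons w) (one_in hab).
rewrite (at_beval e aS) (at_beval e bS) andbT.
by case: (beval v bx a); case: (beval v bx b).
Qed.

Lemma le_ext a b : a \in S -> b \in S -> ext a \subset ext b -> L (Imp a b).
Proof.
move=> aS bS /subsetP sub; apply: fund => s v bx cs e /=.
case ea: (beval v bx a) => //=.
have ws : pb (cons s) by apply/pbP.
have := sub (exist _ s ws); rewrite !inE /= (at_beval e aS) (at_beval e bS) ea.
by move=> ->.
Qed.

Lemma ext_eq_iff a b : a \in S -> b \in S -> ext a = ext b -> L (Iff a b).
Proof.
move=> aS bS e.
have h1 : L (Imp a b) by apply: le_ext aS bS _; rewrite e subxx.
have h2 : L (Imp b a) by apply: le_ext bS aS _; rewrite e subxx.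
apply: (@taut_cons L hL [:: Imp a b; Imp b a]).
  by move=> h; rewrite !inE => /orP[] /eqP ->.
by move=> v bx /=; rewrite andbT.
Qed.

Lemma ext_theorem a : a \in S -> L a -> ext a = setT.
Proof.
move=> aS ha; apply/setP => w; rewrite !inE.
have [v [bx [e /=]]] := @realize _ [:: a] (@wcons w) (one_in ha).
by rewrite (at_beval e aS) andbT.
Qed.

Lemma counter f : f \in S -> ~ L f -> exists w : W, w \notin ext f.
Proof.
move=> fS nf; apply: NNPP => N; apply: nf; apply: fund => s v bx cs e.
have ws : pb (cons s) by apply/pbP.
apply: NNPP => nb; apply: N; exists (exist _ s ws).
by rewrite inE /= (at_beval e fS); apply/negP.
Qed.

End Atoms.

Lemma truth_subst (F : finframe) (V : nat -> {set F}) s a :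
  truth F V (subst s a) = truth F (fun k => truth F V (s k)) a.
Proof. by elim: a => [k|b IH|b IHb c IHc|b IH] //=; rewrite ?IH ?IHb ?IHc. Qed.

Lemma beval_truth (F : finframe) (V : nat -> {set F}) (w : F) f :
  beval (fun k => w \in V k) (fun a => w \in truth F V (Box a)) f = (w \in truth F V f).
Proof.
elim: f => [k|b IH|b IHb c IHc|b IH] //=; by rewrite ?inE ?IH ?IHb ?IHc.
Qed.

Lemma iffT (F : finframe) (V : nat -> {set F}) a b :
  (truth F V (Iff a b) == setT) = (truth F V a == truth F V b).
Proof.
apply/eqP/eqP => [h|h]; apply/setP => w.
  move/setP/(_ w): h; rewrite /= !inE.
  by case: (w \in truth F V a); case: (w \in truth F V b).
by rewrite /= h !inE; case: (w \in truth F V b).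
Qed.

Lemma valid_logic (F : finframe) : is_logic (valid F).
Proof.
split.
- move=> f hf V; apply/setP => w; rewrite inE -beval_truth; exact: hf.
- move=> a b ha hab V; apply/setP => w; rewrite inE.
  move/setP/(_ w): (hab V); move/setP/(_ w): (ha V); rewrite /= !inE.
  by case: (w \in truth F V a); case: (w \in truth F V b).
- by move=> s a ha V; rewrite truth_subst; exact: ha.
- move=> a b h V; apply/eqP; rewrite iffT /=.
  by have := h V; move/eqP; rewrite iffT => /eqP ->.
Qed.

Lemma valid_ax4 (F : finframe) :
  (forall X, fbox F X \subset fbox F (fbox F X)) -> valid F ax4.
Proof.
move=> h V; apply/setP=> w; rewrite /= !inE.
by case: (boolP (w \in fbox F (V 0))) => //= /(subsetP (h _)) ->.
Qed.

Lemma valid_axT (F : finframe) : (forall X, fbox F X \subset X) -> valid F axT.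
Proof.
move=> h V; apply/setP=> w; rewrite /= !inE.
by case: (boolP (w \in fbox F (V 0))) => //= /(subsetP (h _)) ->.
Qed.

Lemma valid_axM (F : finframe) :
  (forall X Y : {set F}, X \subset Y -> fbox F X \subset fbox F Y) -> valid F axM.
Proof.
move=> h V; apply/setP=> w; rewrite /= !inE.
case: (boolP (w \in fbox F (V 0 :&: V 1))) => //= wi.
by rewrite (subsetP (h _ _ (subsetIl _ _)) _ wi) (subsetP (h _ _ (subsetIr _ _)) _ wi).
Qed.

Lemma valid_axC (F : finframe) :
  (forall X Y : {set F}, fbox F X :&: fbox F Y \subset fbox F (X :&: Y)) -> valid F axC.
Proof.
move=> h V; apply/setP=> w; rewrite /= !inE.
case: (boolP (w \in fbox F (V 0))) => //= w0.
case: (boolP (w \in fbox F (V 1))) => //= w1.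
by rewrite (subsetP (h _ _) w) // inE w0 w1.
Qed.

Lemma vf_truth (F : finframe) (V V' : nat -> {set F}) a : var_free a -> truth F V a = truth F V' a.
Proof.
elim => [|| b _ IH | b c _ IHb _ IHc | b _ IH] /=; rewrite ?IH ?IHb ?IHc //.
- by rewrite !setICr.
- by rewrite !setICr.
Qed.

Lemma Lnil_in (L : form -> Prop) : forall h, h \in [::] -> L h.
Proof. by []. Qed.
Lemma Lcons_in (L : form -> Prop) a hs :
  L a -> (forall h, h \in hs -> L h) -> forall h, h \in a :: hs -> L h.
Proof. by move=> ha H h; rewrite inE => /orP[/eqP -> // | ]; exact: H. Qed.

Definition sclosed (S : seq form) : Prop := forall a, a \in S ->
  match a with
  | Neg b => b \in S | And b c => (b \in S) && (c \in S) | Box b => b \in S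
  | Var _ => true end.

Definition unbox f := if f is Box c then Some c else None.

Fixpoint delta (G : seq form) : form :=
  if G is c :: G' then And (And c (Box c)) (delta G') else Top.

Lemma beval_delta v bx G :
  beval v bx (delta G) = all (fun c => beval v bx c && bx c) G.
Proof. by elim: G => [|c G IH] /=; [exact: beval_Top | rewrite IH]. Qed.

Section Frames.
Variable L : form -> Prop.
Hypothesis hL : is_logic L.
Variable S : seq form.
Hypothesis scl : sclosed S.
Local Notation W := {s : {ffun 'I_(size S) -> bool} | pb (cons L s)}.
Variable ne : 0 < #|{: W}|.
Local Notation ext := (ext L S).

Definition boxes := pmap unbox S.
Lemma boxesP c : (c \in boxes) = (Box c \in S).
Proof.
rewrite /boxes mem_pmap; apply/mapP/idP => [[f fS]|h]; last by exists (Box c).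
by case: f fS => //= c' fS [->].
Qed.
Lemma boxS c : c \in boxes -> Box c \in S. Proof. by rewrite boxesP. Qed.
Lemma boxS' c : c \in boxes -> c \in S. Proof. by move=> /boxS /scl. Qed.

Definition mkF (fb : {set W} -> {set W}) : finframe := FinFrame W ne fb.
Definition VS : nat -> {set W} := fun k => ext (Var k).

Lemma wreal (w : W) (hs : seq form) : (forall h, h \in hs -> L h) ->
  exists v bx, atom_of S v bx = val w /\ all (beval v bx) hs.
Proof. by move=> H; have := realize hL (@wcons L S w) H. Qed.

Lemma truth_lemma fb : (forall c, c \in boxes -> fb (ext c) = ext (Box c)) ->
  forall a, a \in S -> truth (mkF fb) VS a = ext a.
Proof.
move=> hb; elim => [k|b IH|b IHb c IHc|b IH] aS //=.
- have bS := scl aS; rewrite IH //; apply/setP => w; rewrite !inE.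
  have [v [bx [e _]]] := wreal w (@Lnil_in L).
  by rewrite (at_beval e aS) (at_beval e bS).
- have /andP [bS cS] := scl aS; rewrite IHb // IHc //; apply/setP => w; rewrite !inE.
  have [v [bx [e _]]] := wreal w (@Lnil_in L).
  by rewrite (at_beval e aS) (at_beval e bS) (at_beval e cS).
- have bS := scl aS; rewrite IH //; apply: hb; by rewrite boxesP.
Qed.

Lemma frame_psi fb psi : (forall c, c \in boxes -> fb (ext c) = ext (Box c)) ->
  psi \in S -> var_free psi -> L psi -> valid (mkF fb) psi.
Proof.
move=> hb pS vf lp V; rewrite (vf_truth V VS vf) truth_lemma //.
exact: ext_theorem.
Qed.

Lemma frame_refute fb f : (forall c, c \in boxes -> fb (ext c) = ext (Box c)) ->
  f \in S -> ~ L f -> ~ valid (mkF fb) f.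
Proof.
move=> hb fS nf val; have [w wn] := counter hL fS nf.
by move: (val VS); rewrite truth_lemma // => e; move: wn; rewrite e inE.
Qed.

Lemma iff_ext a b : a \in S -> b \in S -> L (Iff a b) -> ext a = ext b.
Proof.
move=> aS bS h; apply/eqP; rewrite eqEsubset; apply/andP; split; apply: ext_le => //;
  apply: (taut_cons hL (Lcons_in h (@Lnil_in L))) => v bx /=; rewrite andbT;
  by case: (beval v bx a); case: (beval v bx b).
Qed.

Definition fbE (X : {set W}) : {set W} :=
  if ohead [seq c <- boxes | ext c == X] is Some c then ext (Box c) else X.

Lemma fbE_spec X :
  (exists2 c, c \in boxes & ext c = X /\ fbE X = ext (Box c)) \/
  ((forall c, c \in boxes -> ext c != X) /\ fbE X = X).
Proof.
rewrite /fbE; case E: [seq c <- boxes | ext c == X] => [|c t] /=.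
  right; split=> // c cb; apply/negP => e.
  have : c \in [seq c <- boxes | ext c == X] by rewrite mem_filter e cb.
  by rewrite E.
left; have : c \in [seq c <- boxes | ext c == X] by rewrite E inE eqxx.
by rewrite mem_filter => /andP[/eqP e cb]; exists c.
Qed.

Lemma box_wd c c' : c \in boxes -> c' \in boxes -> ext c = ext c' ->
  ext (Box c) = ext (Box c').
Proof.
move=> cb c'b e; apply: (iff_ext (boxS cb) (boxS c'b)).
apply: (LRE hL); have h1 := boxS' cb; have h2 := boxS' c'b.
by have := ext_eq_iff hL h1 h2; apply.
Qed.

Lemma hbE c : c \in boxes -> fbE (ext c) = ext (Box c).
Proof.
move=> cb; case: (fbE_spec (ext c)) => [[c' c'b [e ->]] | [h _]].
  by apply: box_wd.
by have := h c cb; rewrite eqxx.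
Qed.

Lemma fbE_4 (h4 : L ax4) X : fbE X \subset fbE (fbE X).
Proof.
case: (fbE_spec X) => [[c cb [e ->]] | [h ->]]; last first.
  case: (fbE_spec X) => [[c cb [e _]] | [_ ->]]; last by rewrite subxx.
  by have := h c cb; rewrite e eqxx.
case: (fbE_spec (ext (Box c))) => [[c' c'b [e' ->]] | [_ ->]]; last by rewrite subxx.
have h1 := boxS cb; have h2 := boxS c'b.
apply: (ext_le hL h1 h2).
have i1 := ext_eq_iff hL (boxS' c'b) (boxS cb) e'.
have i2 := LRE hL i1.
have i3 := @L_ax4 L hL c h4.
apply: (taut_cons hL (Lcons_in i2 (Lcons_in i3 (@Lnil_in L)))) => v bx /=.
by case: (bx c); case: (bx c'); case: (bx (Box c)).
Qed.

Definition fbS (X : {set W}) : {set W} :=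
  [set w | has (fun c => (w \in ext (Box c)) && (ext (Box c) \subset X)) boxes].

Lemma hbS (hT : L axT) (hM : L axM) (h4 : L ax4) c :
  c \in boxes -> fbS (ext c) = ext (Box c).
Proof.
move=> cb; apply/setP => w; rewrite inE; apply/hasP/idP => [[c' c'b /andP[wi sub]] | wi].
  have h1 := boxS c'b; have h2 := boxS' cb; have h3 := boxS cb.
  have i1 := le_ext hL h1 h2 sub.
  have i2 := L_mono hL hM i1.
  have i3 := @L_ax4 L hL c' h4.
  have i4 : L (Imp (Box c') (Box c)).
    apply: (taut_cons hL (Lcons_in i2 (Lcons_in i3 (@Lnil_in L)))) => v bx /=.
    by case: (bx c); case: (bx c'); case: (bx (Box c')).
  exact: (subsetP (ext_le hL h1 h3 i4)).
have h2 := boxS' cb; have h3 := boxS cb.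
exists c => //; rewrite wi /=; exact (ext_le hL h3 h2 (@L_axT L hL c hT)).
Qed.

Lemma fbS_T X : fbS X \subset X.
Proof.
apply/subsetP => w; rewrite inE => /hasP [c _ /andP [wi s]]; exact: (subsetP s).
Qed.

Lemma fbS_M (X Y : {set W}) : X \subset Y -> fbS X \subset fbS Y.
Proof.
move=> h; apply/subsetP => w; rewrite !inE => /hasP [c cb /andP [wi s]].
by apply/hasP; exists c => //; rewrite wi (subset_trans s h).
Qed.

Lemma fbS_4 X : fbS X \subset fbS (fbS X).
Proof.
apply/subsetP => w; rewrite !inE => /hasP [c cb /andP [wi s]].
apply/hasP; exists c => //; rewrite wi /=.
by apply/subsetP => u ui; rewrite inE; apply/hasP; exists c => //; rewrite ui.
Qed.

Definition Rw (w : W) : {set W} :=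
  [set u | all (fun c => (w \in ext (Box c)) ==> (u \in ext c) && (u \in ext (Box c))) boxes].
Definition fbC (X : {set W}) : {set W} :=
  [set w | (w \in ext (Box Top)) && (Rw w \subset X)].

Lemma box_delta (h4 : L ax4) (hC : L axC) G :
  L (Imp (And (Box Top) (bigAnd (map Box G))) (Box (delta G))).
Proof.
elim: G => [|c G IH] /=.
  by apply: (Ltaut hL) => v bx /=; case: (bx Top); case: (v 0).
have i1 := @L_ax4 L hL c h4.
have i2 := @L_axC L hL c (Box c) hC.
have i3 := @L_axC L hL (And c (Box c)) (delta G) hC.
apply: (taut_cons hL (Lcons_in IH (Lcons_in i1 (Lcons_in i2 (Lcons_in i3 (@Lnil_in L)))))) => v bx /=.
case: (bx Top); case: (beval v bx (bigAnd (map Box G))); case: (bx c); case: (bx (Box c));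
  case: (bx (And c (Box c))); case: (bx (delta G)); case: (bx (And (And c (Box c)) (delta G))); by [].
Qed.

Lemma fbC_M (X Y : {set W}) : X \subset Y -> fbC X \subset fbC Y.
Proof.
move=> h; apply/subsetP => w; rewrite !inE => /andP [wT s].
by rewrite wT (subset_trans s h).
Qed.

Lemma fbC_C (X Y : {set W}) : fbC X :&: fbC Y \subset fbC (X :&: Y).
Proof.
apply/subsetP => w; rewrite !inE => /andP[/andP[wT s1] /andP[_ s2]].
by rewrite wT subsetI s1 s2.
Qed.

Hypothesis hTop : Box Top \in S.

Lemma in_fbC X w : (w \in fbC X) = (w \in ext (Box Top)) && (Rw w \subset X).
Proof. by rewrite inE. Qed.
Lemma in_Rw w u : (u \in Rw w) =
  all (fun c => (w \in ext (Box c)) ==> (u \in ext c) && (u \in ext (Box c))) boxes.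
Proof. by rewrite inE. Qed.

Lemma fbC_4 X : fbC X \subset fbC (fbC X).
Proof.
apply/subsetP => w; rewrite !in_fbC => /andP [wT sub]; rewrite wT /=.
apply/subsetP => u uR; rewrite in_fbC.
have Tb : Top \in boxes by rewrite boxesP.
move: (uR); rewrite in_Rw => /allP uR'.
have := uR' Top Tb; rewrite wT /= => /andP [_ uT]; rewrite uT /=.
apply/subsetP => x xR; apply: (subsetP sub); rewrite in_Rw; apply/allP => c cb.
apply/implyP => wc.
have := uR' c cb; rewrite wc /= => /andP [_ uc].
by move: xR; rewrite in_Rw => /allP /(_ c cb); rewrite uc.
Qed.

Lemma hbC (hM : L axM) (h4 : L ax4) (hC : L axC) c :
  c \in boxes -> fbC (ext c) = ext (Box c).
Proof.
move=> cb; apply/setP => w; apply/idP/idP => [|wi]; last first.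
  rewrite in_fbC; apply/andP; split.
    have h3 := boxS cb.
    apply: (subsetP (ext_le hL h3 hTop _)) wi.
    apply: (L_mono hL hM); apply: (Ltaut hL) => v bx /=.
    by case: (beval v bx c); case: (v 0).
  apply/subsetP => u; rewrite in_Rw => /allP /(_ c cb); rewrite wi /=.
  by case/andP.
rewrite in_fbC => /andP [wT sub].
set G := [seq c' <- boxes | w \in ext (Box c')].
have i1 : L (Imp (delta G) c).
  apply: (@fund L hL S) => s v bx cs e /=; rewrite beval_delta.
  case A: all => //=.
  have ws : pb (cons L s) by apply/pbP.
  have uR : exist _ s ws \in Rw w.
    rewrite in_Rw; apply/allP => c' c'b; apply/implyP => wc'.
    have : c' \in G by rewrite mem_filter wc' c'b.
    move/allP: A => A /A /andP [b1 b2].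
    by rewrite !inE /= (at_beval e (boxS' c'b)) (at_beval e (boxS c'b)) /= b1 b2.
  by have := subsetP sub _ uR; rewrite inE /= (at_beval e (boxS' cb)) => ->.
have i2 := L_mono hL hM i1.
have i3 := box_delta h4 hC G.
have [v [bx [e /= A]]] := wreal w (Lcons_in i2 (Lcons_in i3 (@Lnil_in L))).
rewrite inE (at_beval e (boxS cb)) /=.
move: A; rewrite andbT.
have bT : bx Top = true.
  by move: wT; rewrite inE (at_beval e hTop).
have bG : beval v bx (bigAnd (map Box G)) = true.
  rewrite beval_bigAnd all_map; apply/allP => c' /=.
  rewrite mem_filter => /andP [wc' c'b].
  by move: wc'; rewrite inE (at_beval e (boxS c'b)).
rewrite bT bG.
by case: (bx (delta G)); case: (bx c).
Qed.

End Frames.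

Fixpoint sub (f : form) : seq form :=
  f :: match f with
       | Var _ => [::] | Neg a => sub a | And a b => sub a ++ sub b | Box a => sub a
       end.

Lemma sub_self f : f \in sub f.
Proof. by case: f => *; rewrite inE eqxx. Qed.

Lemma sub_trans a b : a \in sub b -> {subset sub a <= sub b}.
Proof.
elim: b => [k|b IH|b IHb c IHc|b IH] ha x hx.
- by move: ha; rewrite inE => /eqP e; rewrite -e.
- move: ha; rewrite inE => /orP [/eqP e|h]; first by rewrite -e.
  by rewrite /= inE (IH h x hx) orbT.
- move: ha; rewrite inE => /orP [/eqP e|]; first by rewrite -e.
  rewrite mem_cat => /orP [h|h].
    by rewrite /= inE mem_cat (IHb h x hx) orbT.
  by rewrite /= inE mem_cat (IHc h x hx) !orbT.
- move: ha; rewrite inE => /orP [/eqP e|h]; first by rewrite -e.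
  by rewrite /= inE (IH h x hx) orbT.
Qed.

Lemma sub_closed f : sclosed (sub f).
Proof.
move=> a ha; have H := sub_trans ha.
case: a ha H => //= [b|b c|b] _ H.
- by apply: H; rewrite inE sub_self orbT.
- by rewrite !H // inE mem_cat sub_self ?orbT.
- by apply: H; rewrite inE sub_self orbT.
Qed.

Lemma sclosed_cat S1 S2 : sclosed S1 -> sclosed S2 -> sclosed (S1 ++ S2).
Proof.
move=> h1 h2 a; rewrite mem_cat => /orP [/h1|/h2]; case: a => //= [b|b c|b];
  rewrite ?mem_cat; try (by move=> ->; rewrite ?orbT);
  by case/andP => -> ->; rewrite ?orbT.
Qed.

Lemma gen_is_logic A : is_logic (gen_logic A).
Proof.
split.
- by move=> f hf M hM _; case: hM => h _ _ _; apply: h.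
- move=> a b ha hab M hM hA; case: (hM) => _ h _ _.
  by apply: (h a b); [exact: ha | exact: hab].
- move=> s a ha M hM hA; case: (hM) => _ _ h _; apply: h; exact: ha.
- move=> a b ha M hM hA; case: (hM) => _ _ _ h; apply: h; exact: ha.
Qed.

Lemma pin (L0 : form -> Prop) x a : L0 a -> plus L0 x a.
Proof. by move=> h M _ hA; apply: hA; left. Qed.
Lemma pself (L0 : form -> Prop) x : plus L0 x x.
Proof. by move=> M _ hA; apply: hA; right. Qed.

Lemma plus_valid (F : finframe) (L0 : form -> Prop) x :
  (forall a, L0 a -> valid F a) -> valid F x -> forall a, plus L0 x a -> valid F a.
Proof. by move=> h hx a ha; apply: ha (valid_logic F) _ => b [/h|->]. Qed.

Lemma E_valid (F : finframe) a : E a -> valid F a.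
Proof. by move=> ha; apply: ha (valid_logic F) _. Qed.

Lemma fmp_of (Lg : form -> Prop) :
  (forall f, ~ Lg f -> exists F, (forall g, Lg g -> valid F g) /\ ~ valid F f) -> fmp Lg.
Proof.
move=> H; exists (fun F => forall g, Lg g -> valid F g) => f; split => [h F hF|h].
  exact: hF.
apply: NNPP => nf; have [F [hF nv]] := H f nf; exact: nv (h F hF).
Qed.

Section Final.
Variable psi : form.
Hypothesis vf : var_free psi.

Definition SS f := sub f ++ sub psi ++ sub (Box Top).
Lemma SS_cl f : sclosed (SS f).
Proof. by apply: sclosed_cat; [|apply: sclosed_cat]; apply: sub_closed. Qed.
Lemma SS_f f : f \in SS f.
Proof. by rewrite mem_cat sub_self. Qed.
Lemma SS_psi f : psi \in SS f.
Proof. by rewrite !mem_cat sub_self orbT. Qed.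
Lemma SS_top f : Box Top \in SS f.
Proof. by rewrite !mem_cat sub_self !orbT. Qed.

Lemma fmpE4 : fmp (plus E4 psi).
Proof.
apply: fmp_of => f nf.
have hLg : is_logic (plus E4 psi) := gen_is_logic _.
have scl := @SS_cl f.
have fS := @SS_f f.
have [w _] := counter hLg fS nf.
have ne : 0 < #|{: {s : {ffun 'I_(size (SS f)) -> bool} | pb (cons (plus E4 psi) s)}}|.
  by apply/card_gt0P; exists w.
have h4 : plus E4 psi ax4 by apply: pin; apply: pself.
have hb : forall c, c \in boxes (SS f) -> fbE (ext (plus E4 psi) (SS f) c) = ext (plus E4 psi) (SS f) (Box c).
  by move=> c cb; apply: (hbE hLg scl cb).
exists (mkF ne (@fbE (plus E4 psi) (SS f))); split; last exact: (frame_refute (ne:=ne) hLg scl hb fS nf).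
apply: plus_valid; last exact: (frame_psi (ne:=ne) hLg scl hb (@SS_psi f) vf (@pself E4 psi)).
apply: plus_valid; first exact: E_valid.
apply: valid_ax4; exact: (fbE_4 hLg scl h4).
Qed.

Lemma fmpS04 : fmp (plus S04 psi).
Proof.
apply: fmp_of => f nf.
have hLg : is_logic (plus S04 psi) := gen_is_logic _.
have scl := @SS_cl f.
have fS := @SS_f f.
have [w _] := counter hLg fS nf.
have ne : 0 < #|{: {s : {ffun 'I_(size (SS f)) -> bool} | pb (cons (plus S04 psi) s)}}|.
  by apply/card_gt0P; exists w.
have h4 : plus S04 psi ax4 by do 3! apply: pin; apply: pself.
have hT : plus S04 psi axT by do 2! apply: pin; apply: pself.
have hM : plus S04 psi axM by apply: pin; apply: pself.
have hb : forall c, c \in boxes (SS f) -> fbS (ext (plus S04 psi) (SS f) c) = ext (plus S04 psi) (SS f) (Box c).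
  by move=> c cb; apply: (hbS hLg scl hT hM h4 cb).
exists (mkF ne (@fbS (plus S04 psi) (SS f))); split; last exact: (frame_refute (ne:=ne) hLg scl hb fS nf).
apply: plus_valid; last exact: (frame_psi (ne:=ne) hLg scl hb (@SS_psi f) vf (@pself S04 psi)).
apply: plus_valid; last by apply: valid_axM => X Y; apply: fbS_M.
apply: plus_valid; last by apply: valid_axT => X; apply: fbS_T.
apply: plus_valid; first exact: E_valid.
apply: valid_ax4 => X; exact: fbS_4.
Qed.

Lemma fmpEMC4 : fmp (plus EMC4 psi).
Proof.
apply: fmp_of => f nf.
have hLg : is_logic (plus EMC4 psi) := gen_is_logic _.
have scl := @SS_cl f.
have fS := @SS_f f.
have hTop := @SS_top f.
have [w _] := counter hLg fS nf.
have ne : 0 < #|{: {s : {ffun 'I_(size (SS f)) -> bool} | pb (cons (plus EMC4 psi) s)}}|.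
  by apply/card_gt0P; exists w.
have h4 : plus EMC4 psi ax4 by do 3! apply: pin; apply: pself.
have hM : plus EMC4 psi axM by do 2! apply: pin; apply: pself.
have hC : plus EMC4 psi axC by apply: pin; apply: pself.
have hb : forall c, c \in boxes (SS f) -> fbC (ext (plus EMC4 psi) (SS f) c) = ext (plus EMC4 psi) (SS f) (Box c).
  by move=> c cb; apply: (hbC hLg scl hTop hM h4 hC cb).
exists (mkF ne (@fbC (plus EMC4 psi) (SS f))); split; last exact: (frame_refute (ne:=ne) hLg scl hb fS nf).
apply: plus_valid; last exact: (frame_psi (ne:=ne) hLg scl hb (@SS_psi f) vf (@pself EMC4 psi)).
apply: plus_valid; last by apply: valid_axC => X Y; apply: fbC_C.
apply: plus_valid; last by apply: valid_axM => X Y; apply: fbC_M.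
apply: plus_valid; first exact: E_valid.
apply: valid_ax4 => X; exact: (fbC_4 hTop).
Qed.

End Final.

Theorem mainTheorem3 (psi : form) :
  var_free psi ->
  fmp (plus E4 psi) /\ fmp (plus S04 psi) /\ fmp (plus EMC4 psi).
Proof. by move=> vf; split; [exact: fmpE4 | split; [exact: fmpS04 | exact: fmpEMC4]]. Qed.
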